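(* Let $\mathcal{S}$ be a state space and let $\mathsf{M}^{(1)},\mathsf{M}^{(2)}$ be dichotomic measurements on $\mathcal{S}$ with outcomes $\{+,-\}$. Then $\mathsf{M}^{(1)}$ and $\mathsf{M}^{(2)}$ are maximally incompatible if and only if $\bar P(\mathsf{M}^{(1)},\mathsf{M}^{(2)})=1$ with optimal states that can be chosen affinely dependent, i.e., if and only if there exist affinely dependent states $s_1,s_2,s_3,s_4\in\mathcal{S}$ with $\mathsf{M}^{(1)}_+(s_1)=\mathsf{M}^{(1)}_+(s_2)=1$, $\mathsf{M}^{(1)}_+(s_3)=\mathsf{M}^{(1)}_+(s_4)=0$, $\mathsf{M}^{(2)}_+(s_1)=\mathsf{M}^{(2)}_+(s_4)=1$, $\mathsf{M}^{(2)}_+(s_2)=\mathsf{M}^{(2)}_+(s_3)=0$.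
   Context: General probabilistic theory setting: a state space $\mathcal{S}$ is a compact convex subset of a finite-dimensional real vector space, embedded as a base of a closed generating proper cone in a vector space $V$, with unit effect $u$. Effects are linear functionals $e$ on $V$ with $0\le e\le1$ on $\mathcal{S}$; $\|f\|=\max_{s\in\mathcal{S}}|f(s)|$. A measurement with finite outcome set $\Omega$ is a map $x\mapsto\mathsf{M}_x$ to effects with $\sum_x\mathsf{M}_x=u$; a dichotomic measurement has outcome set $\{+,-\}$. For dichotomic $\mathsf{M}^{(1)},\mathsf{M}^{(2)}$, $\bar P(\mathsf{M}^{(1)},\mathsf{M}^{(2)})=\frac18\sum_{x,y\in\{+,-\}}\|\mathsf{M}^{(1)}_x+\mathsf{M}^{(2)}_y\|$. A measurement $\mathsf{T}$ is trivial if $\mathsf{T}_x=p_xu$ for a probability distribution $(p_x)$. Two measurements with outcome sets $\Omega_1,\Omega_2$ are compatible if there is a measurement $\mathsf{J}$ on $\Omega_1\times\Omega_2$ whose marginals are the two measurements. The degree of incompatibility $d(\mathsf{M}^{(1)},\mathsf{M}^{(2)})$ is the maximal $\lambda\in[0,1]$ such that $\lambda\mathsf{M}^{(1)}+(1-\lambda)\mathsf{T}^{(1)}$ and $\lambda\mathsf{M}^{(2)}+(1-\lambda)\mathsf{T}^{(2)}$ are compatible for some trivial $\mathsf{T}^{(1)},\mathsf{T}^{(2)}$; the measurements are maximally incompatible if $d(\mathsf{M}^{(1)},\mathsf{M}^{(2)})=\frac12$. *)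

(* Defs.v *)
From HB Require Import structures.
From mathcomp Require Import all_boot all_order all_algebra.
From mathcomp Require Import all_classical all_reals all_analysis.
Set Implicit Arguments. Unset Strict Implicit. Unset Printing Implicit Defensive.
Import Order.TTheory GRing.Theory Num.Theory.
Import numFieldNormedType.Exports.
Local Open Scope classical_set_scope.
Local Open Scope ring_scope.

(* The ambient vector space V is 'rV[R]_n; linear functionals on V are
   represented by column vectors f : 'cV[R]_n acting by  v |-> (v *m f) 0 0. *)
Definition ev (R : realType) (n : nat) (f : 'cV[R]_n) (v : 'rV[R]_n) : R :=
  (v *m f) 0 0.

(* S is a state space with unit effect u: S is a nonempty compact convex set,
   u = 1 on S (so S is a base of the cone C = {a s | a >= 0, s in S}), and the
   cone C is generating (V = C - C).  Closedness and properness of C follow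
   from compactness of S and u = 1 on S. *)
Definition state_space (R : realType) (n : nat) (S : set 'rV[R]_n)
    (u : 'cV[R]_n) : Prop :=
  [/\ S !=set0, compact S,
      (forall s t (l : R), S s -> S t -> 0 <= l <= 1 -> S (l *: s + (1 - l) *: t)),
      (forall s, S s -> ev u s = 1) &
      (forall v : 'rV[R]_n, exists (a b : R) (s t : 'rV[R]_n),
          [/\ 0 <= a, 0 <= b, S s, S t & v = a *: s - b *: t])].

Definition effect (R : realType) (n : nat) (S : set 'rV[R]_n) (e : 'cV[R]_n) : Prop :=
  forall s, S s -> 0 <= ev e s <= 1.

Definition measurement (R : realType) (n : nat) (S : set 'rV[R]_n) (u : 'cV[R]_n)
    (Omega : finType) (M : Omega -> 'cV[R]_n) : Prop :=
  (forall x, effect S (M x)) /\ \sum_(x : Omega) M x = u.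

(* dichotomic measurement: outcome set {+,-}, encoded as bool (true = +) *)
Definition dichotomic (R : realType) (n : nat) (S : set 'rV[R]_n) (u : 'cV[R]_n)
    (M : bool -> 'cV[R]_n) : Prop := measurement S u M.

(* ||f|| = max_{s in S} |f(s)| (S compact nonempty, so the sup is a max) *)
Definition fnorm (R : realType) (n : nat) (S : set 'rV[R]_n) (f : 'cV[R]_n) : R :=
  sup [set `|ev f s| | s in S].

Definition Pbar (R : realType) (n : nat) (S : set 'rV[R]_n)
    (M1 M2 : bool -> 'cV[R]_n) : R :=
  8^-1 * \sum_(x : bool) \sum_(y : bool) fnorm S (M1 x + M2 y).

Definition trivial_meas (R : realType) (n : nat) (u : 'cV[R]_n)
    (Omega : finType) (T : Omega -> 'cV[R]_n) : Prop :=
  exists p : Omega -> R,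
    [/\ (forall x, 0 <= p x), \sum_(x : Omega) p x = 1 & forall x, T x = p x *: u].

Definition compatible (R : realType) (n : nat) (S : set 'rV[R]_n) (u : 'cV[R]_n)
    (O1 O2 : finType) (M1 : O1 -> 'cV[R]_n) (M2 : O2 -> 'cV[R]_n) : Prop :=
  exists J : O1 * O2 -> 'cV[R]_n,
    [/\ measurement S u J,
        (forall x, \sum_(y : O2) J (x, y) = M1 x) &
        (forall y, \sum_(x : O1) J (x, y) = M2 y)].

Definition admissible_lambda (R : realType) (n : nat) (S : set 'rV[R]_n)
    (u : 'cV[R]_n) (O1 O2 : finType) (M1 : O1 -> 'cV[R]_n) (M2 : O2 -> 'cV[R]_n)
    (l : R) : Prop :=
  0 <= l <= 1 /\
  exists (T1 : O1 -> 'cV[R]_n) (T2 : O2 -> 'cV[R]_n),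
    [/\ trivial_meas u T1, trivial_meas u T2 &
        compatible S u (fun x => l *: M1 x + (1 - l) *: T1 x)
                       (fun y => l *: M2 y + (1 - l) *: T2 y)].

(* d(M1,M2) = 1/2, i.e. 1/2 is the maximal admissible lambda *)
Definition maximally_incompatible (R : realType) (n : nat) (S : set 'rV[R]_n)
    (u : 'cV[R]_n) (O1 O2 : finType) (M1 : O1 -> 'cV[R]_n) (M2 : O2 -> 'cV[R]_n)
    : Prop :=
  admissible_lambda S u M1 M2 (2^-1) /\
  forall l, admissible_lambda S u M1 M2 l -> l <= 2^-1.

Definition affinely_dependent4 (R : realType) (n : nat)
    (s1 s2 s3 s4 : 'rV[R]_n) : Prop :=
  exists a1 a2 a3 a4 : R,
    [/\ [|| a1 != 0, a2 != 0, a3 != 0 | a4 != 0],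
        a1 + a2 + a3 + a4 = 0 &
        a1 *: s1 + a2 *: s2 + a3 *: s3 + a4 *: s4 = 0].

(* Main.v *)
Require Import Defs.
From HB Require Import structures.
From mathcomp Require Import all_boot all_order all_algebra.
From mathcomp Require Import all_classical all_reals all_analysis.
From mathcomp Require Import ring lra.
Import Order.TTheory GRing.Theory Num.Theory.
Import numFieldNormedType.Exports.
Local Open Scope classical_set_scope.
Local Open Scope ring_scope.
Set Implicit Arguments. Unset Strict Implicit. Unset Printing Implicit Defensive.

Section Ev.
Variables (R : realType) (n : nat).
Implicit Types (f g : 'cV[R]_n) (v w : 'rV[R]_n).

Lemma evD f g v : ev (f + g) v = ev f v + ev g v.
Proof. by rewrite /ev mulmxDr mxE. Qed.
Lemma evZ c f v : ev (c *: f) v = c * ev f v.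
Proof. by rewrite /ev -scalemxAr mxE. Qed.
Lemma evN f v : ev (- f) v = - ev f v.
Proof. by rewrite /ev mulmxN mxE. Qed.
Lemma evB f g v : ev (f - g) v = ev f v - ev g v.
Proof. by rewrite evD evN. Qed.
Lemma ev0 v : ev 0 v = 0.
Proof. by rewrite /ev mulmx0 mxE. Qed.
Lemma evDr f v w : ev f (v + w) = ev f v + ev f w.
Proof. by rewrite /ev mulmxDl mxE. Qed.
Lemma evZr c f v : ev f (c *: v) = c * ev f v.
Proof. by rewrite /ev -scalemxAl mxE. Qed.
Lemma evNr f v : ev f (- v) = - ev f v.
Proof. by rewrite /ev mulNmx mxE. Qed.
Lemma evBr f v w : ev f (v - w) = ev f v - ev f w.
Proof. by rewrite evDr evNr. Qed.
Lemma ev0r f : ev f 0 = 0.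
Proof. by rewrite /ev mul0mx mxE. Qed.
Lemma evE f v : ev f v = \sum_j v 0 j * f j 0.
Proof. by rewrite /ev mxE. Qed.

Lemma ev_continuous f : continuous (ev f).
Proof.
have -> : ev f = (fun v => \sum_j v 0 j * f j 0).
  by apply/funext => v; rewrite evE.
apply: (@continuous_big _ _ +%R 0 xpredT).
  exact: (@add_continuous R^o).
move=> j _ v; apply: continuousM; first exact: coord_continuous.
exact: cst_continuous.
Qed.
End Ev.

Section Cpt.
Variables (R : realType) (n : nat).

Lemma min_pos (S : set 'rV[R]_n) (phi psi : 'rV[R]_n -> R) :
  compact S -> continuous phi -> continuous psi ->
  (forall s, S s -> phi s <= 0 -> 0 < psi s) ->
  exists2 eta : R, 0 < eta & forall s, S s -> phi s <= 0 -> eta <= psi s.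
Proof.
move=> cS cphi cpsi H.
pose K := S `&` (phi @^-1` [set x : R | x <= 0]).
have cK : compact K.
  apply: compact_closedI => //.
  by apply: (proj1 (continuous_closedP _)) => //; exact: closed_le.
have [[s0 Ks0]|K0] := pselect (K !=set0).
  have [c cK' cmin] := compact_EVT_min (ex_intro _ s0 Ks0) cK
     (continuous_subspaceT cpsi).
  move: cK'; rewrite inE => -[Sc phic].
  exists (psi c); first exact: H.
  by move=> s Ss phis; apply: cmin; rewrite inE.
exists 1 => // s Ss phis; exfalso; apply: K0; by exists s.
Qed.

Lemma bound_cpt (S : set 'rV[R]_n) (phi : 'rV[R]_n -> R) :
  compact S -> S !=set0 -> continuous phi ->
  exists2 H : R, 0 < H & forall s, S s -> `|phi s| <= H.
Proof.
move=> cS S0 cphi.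
have [c1 _ c1max] := compact_EVT_max S0 cS (continuous_subspaceT cphi).
have [c2 _ c2min] := compact_EVT_min S0 cS (continuous_subspaceT cphi).
exists (`|phi c1| + `|phi c2| + 1).
  by have := normr_ge0 (phi c1); have := normr_ge0 (phi c2); lra.
move=> s Ss.
have h1 := c1max s (mem_set Ss); have h2 := c2min s (mem_set Ss).
have a := ler_norm (phi c1); have b := ler_norm (- phi c2); rewrite normrN in b.
have := normr_ge0 (phi c1); have := normr_ge0 (phi c2) => c d.
rewrite ler_norml; apply/andP; split; lra.
Qed.
End Cpt.

Section Adm.
Variables (R : realType) (n : nat).

Lemma ev_inj (f g : 'cV[R]_n) : (forall v, ev f v = ev g v) -> f = g.
Proof.
move=> H; apply/colP => i; have := H (delta_mx 0 i).
by rewrite /ev -!rowE !mxE.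
Qed.

Lemma dich_false (S : set 'rV[R]_n) u M v : dichotomic S u M ->
  ev (M false) v = ev u v - ev (M true) v.
Proof.
move=> [_ HM]; move: HM; rewrite big_bool /= => <-.
rewrite evD; ring.
Qed.

Lemma dich_eff (S : set 'rV[R]_n) u M x s : dichotomic S u M -> S s ->
  0 <= ev (M x) s <= 1.
Proof. by move=> [H _] Ss; apply: H. Qed.

Lemma build_adm (S : set 'rV[R]_n) u M1 M2 (lam d : R) (h : 'cV[R]_n) :
  dichotomic S u M1 -> dichotomic S u M2 -> (forall s, S s -> ev u s = 1) ->
  0 <= lam <= 1 ->
  (forall s, S s ->
     [/\ 0 <= lam * (ev (M1 true) s + ev (M2 true) s) / 2 + d * ev h s,
         0 <= lam * (ev (M1 true) s - ev (M2 true) s) / 2 + (1 - lam) / 2 - d * ev h s,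
         0 <= lam * (ev (M2 true) s - ev (M1 true) s) / 2 + (1 - lam) / 2 - d * ev h s
       & 0 <= lam - lam * (ev (M1 true) s + ev (M2 true) s) / 2 + d * ev h s]) ->
  admissible_lambda S u M1 M2 lam.
Proof.
move=> D1 D2 Su Hlam Hs; split => //.
exists (fun _ => 2^-1 *: u), (fun _ => 2^-1 *: u).
have tr : trivial_meas u (fun _ : bool => 2^-1 *: u).
  exists (fun _ => 2^-1); split => //.
  by rewrite big_bool /=; lra.
split => //.
pose N1 := fun x => lam *: M1 x + (1 - lam) *: (2^-1 *: u).
pose N2 := fun x => lam *: M2 x + (1 - lam) *: (2^-1 *: u).
pose g := (lam / 2) *: (M1 true + M2 true) + d *: h.
pose J := fun p : bool * bool => match p with
  | (true, true) => g | (true, false) => N1 true - g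
  | (false, true) => N2 true - g | (false, false) => N1 false - N2 true + g end.
exists J; split.
- split.
  + move=> [[] []] s Ss /=; rewrite /g /N1 /N2;
    rewrite !(evD, evN, evZ) ?(dich_false s D1) ?(dich_false s D2) ?(Su s Ss);
    have [A1 A2 A3 A4] := Hs s Ss; have := dich_eff true D1 Ss; have := dich_eff true D2 Ss;
    move=> /andP[B1 B2] /andP[B3 B4]; apply/andP; split; lra.
  + rewrite (eq_bigr (fun p => J (p.1, p.2))); last by case.
    rewrite -(pair_bigA _ (fun x y => J (x, y))) !big_bool /=; apply: ev_inj => v.
    rewrite /J /g /N1 /N2 !(evD, evN, evZ) (dich_false _ D1); by field.
- by move=> [] /=; rewrite big_bool /=; apply: ev_inj => v;
    rewrite /J /g /N1 /N2 !(evD, evN, evZ) ?(dich_false _ D1) ?(dich_false _ D2); by field.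
- by move=> [] /=; rewrite big_bool /=; apply: ev_inj => v;
    rewrite /J /g /N1 /N2 !(evD, evN, evZ) ?(dich_false _ D1) ?(dich_false _ D2); by field.
Qed.
End Adm.

Section Bound.
Variables (R : realType) (n : nat).

Lemma sq_rel (a b : 'cV[R]_n) (s1 s2 s3 s4 : 'rV[R]_n) :
  affinely_dependent4 s1 s2 s3 s4 ->
  [/\ ev a s1 = 1, ev a s2 = 1, ev a s3 = 0 & ev a s4 = 0] ->
  [/\ ev b s1 = 1, ev b s4 = 1, ev b s2 = 0 & ev b s3 = 0] ->
  forall f, ev f s1 + ev f s3 = ev f s2 + ev f s4.
Proof.
move=> [a1 [a2 [a3 [a4 [Hor Hsum Hc]]]]] [x1 x2 x3 x4] [y1 y4 y2 y3] f.
have E g : a1 * ev g s1 + a2 * ev g s2 + a3 * ev g s3 + a4 * ev g s4 = 0.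
  by rewrite -(ev0r g) -Hc !(evDr, evZr).
have Ea := E a; rewrite x1 x2 x3 x4 in Ea.
have Eb := E b; rewrite y1 y2 y3 y4 in Eb.
have a1n0 : a1 != 0.
  apply/negP => /eqP a10; move: Hor.
  have -> : a2 = 0 by lra.
  have -> : a4 = 0 by lra.
  have -> : a3 = 0 by lra.
  by rewrite a10 eqxx.
have Ef := E f.
have e2 : a2 = - a1 by lra.
have e3 : a3 = a1 by lra.
have e4 : a4 = - a1 by lra.
rewrite e2 e3 e4 in Ef.
have : a1 * (ev f s1 + ev f s3 - ev f s2 - ev f s4) = 0 by lra.
move/eqP; rewrite mulf_eq0 (negbTE a1n0) /= => /eqP; lra.
Qed.
End Bound.

Section Bound2.
Variables (R : realType) (n : nat).

Lemma adm_bound (S : set 'rV[R]_n) u M1 M2 l (s1 s2 s3 s4 : 'rV[R]_n) :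
  (forall s, S s -> ev u s = 1) -> dichotomic S u M1 -> dichotomic S u M2 ->
  [/\ S s1, S s2, S s3 & S s4] -> affinely_dependent4 s1 s2 s3 s4 ->
  [/\ ev (M1 true) s1 = 1, ev (M1 true) s2 = 1,
      ev (M1 true) s3 = 0 & ev (M1 true) s4 = 0] ->
  [/\ ev (M2 true) s1 = 1, ev (M2 true) s4 = 1,
      ev (M2 true) s2 = 0 & ev (M2 true) s3 = 0] ->
  admissible_lambda S u M1 M2 l -> l <= 2^-1.
Proof.
move=> Su D1 D2 [S1 S2 S3 S4] Had HM1 HM2.
have [a1 a2 a3 a4] := HM1; have [b1 b4 b2 b3] := HM2.
have SR := sq_rel Had HM1 HM2.
move=> [Hl [T1 [T2 [[p [p0 psum Tp]] [q [q0 qsum Tq]] [J [[Jeff _] HJ1 HJ2]]]]]].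
have m1 x s : S s -> ev (J (x, true)) s + ev (J (x, false)) s
    = l * ev (M1 x) s + (1 - l) * p x.
  move=> Ss; rewrite -evD; have := HJ1 x; rewrite big_bool /= => ->.
  by rewrite evD !evZ Tp evZ Su // mulr1.
have m2 y s : S s -> ev (J (true, y)) s + ev (J (false, y)) s
    = l * ev (M2 y) s + (1 - l) * q y.
  move=> Ss; rewrite -evD; have := HJ2 y; rewrite big_bool /= => ->.
  by rewrite evD !evZ Tq evZ Su // mulr1.
have J0 x y s : S s -> 0 <= ev (J (x, y)) s.
  by move=> Ss; have /andP[] := Jeff (x, y) s Ss.
have := SR (J (true, true)).
have := m1 false s1 S1; have := m2 true s1 S1; have := J0 false false s1 S1.
have := J0 true true s3 S3.
have := m2 true s2 S2; have := J0 false true s2 S2.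
have := m1 true s4 S4; have := J0 true false s4 S4.
rewrite (dich_false s1 D1) Su // ?a1 ?a2 ?a3 ?a4 ?b1 ?b2 ?b3 ?b4.
have : (1 - l) * p true + (1 - l) * p false = 1 - l.
  by rewrite -mulrDr; move: psum; rewrite big_bool /= => ->; rewrite mulr1.
lra.
Qed.
End Bound2.

Lemma arith (R : realType) (x y z H eta d e m : R) :
  0 <= x <= 1 -> 0 <= y <= 1 -> -H <= z <= H -> 0 < m -> 0 < eta ->
  0 <= d -> d * H = eta / 8 -> 0 < e -> e <= eta / 8 -> e <= d * m / 2 ->
  (z <= 0 -> eta <= x + y) -> (z <= 0 -> eta <= 2 - x - y) ->
  (- z - m / 2 <= 0 -> eta <= 1 + x - y) -> (- z - m / 2 <= 0 -> eta <= 1 - x + y) ->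
  [/\ 0 <= (2^-1 + e) * (x + y) / 2 + d * z,
      0 <= (2^-1 + e) * (x - y) / 2 + (1 - (2^-1 + e)) / 2 - d * z,
      0 <= (2^-1 + e) * (y - x) / 2 + (1 - (2^-1 + e)) / 2 - d * z
    & 0 <= (2^-1 + e) - (2^-1 + e) * (x + y) / 2 + d * z].
Proof.
move=> /andP[x0 x1] /andP[y0 y1] /andP[zl zh] m0 eta0 d0 dH e0 e1 e2 hA hD hB hC.
have p1 : 0 <= d * (z + H) by apply: mulr_ge0 => //; lra.
have p2 : 0 <= d * (H - z) by apply: mulr_ge0 => //; lra.
have q1 := mulr_ge0 (ltW e0) x0. have q2 := mulr_ge0 (ltW e0) y0.
have q3 : 0 <= e * (1 - x) by apply: mulr_ge0; lra.
have q4 : 0 <= e * (1 - y) by apply: mulr_ge0; lra.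
have [zn|zp] := lerP z 0; have [wn|wp] := lerP (- z - m / 2) 0.
- have := hA zn; have := hD zn; have := hB wn; have := hC wn.
  split; lra.
- have := hA zn; have := hD zn.
  have r : 0 <= d * (- z - m / 2) by apply: mulr_ge0 => //; lra.
  split; lra.
- have := hB wn; have := hC wn.
  have r : 0 <= d * z by apply: mulr_ge0 => //; lra.
  split; lra.
- have r : 0 <= d * (- z - m / 2) by apply: mulr_ge0 => //; lra.
  have r' : 0 <= d * z by apply: mulr_ge0 => //; lra.
  split; lra.
Qed.

Section Pert.
Variables (R : realType) (n : nat).

Lemma pos_min2 (a b : R) : 0 < a -> 0 < b -> exists2 c, 0 < c & c <= a /\ c <= b.
Proof. move=> a0 b0; have [ab|ba] := lerP a b; [exists a | exists b] => //; split; lra. Qed.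

Lemma perturb (S : set 'rV[R]_n) u M1 M2 (h : 'cV[R]_n) (m : R) :
  state_space S u -> dichotomic S u M1 -> dichotomic S u M2 -> 0 < m ->
  (forall s, S s -> ev (M1 true) s = 1 -> ev (M2 true) s = 1 -> m <= ev h s) ->
  (forall s, S s -> ev (M1 true) s = 0 -> ev (M2 true) s = 0 -> m <= ev h s) ->
  (forall s, S s -> ev (M1 true) s = 1 -> ev (M2 true) s = 0 -> ev h s <= - m) ->
  (forall s, S s -> ev (M1 true) s = 0 -> ev (M2 true) s = 1 -> ev h s <= - m) ->
  exists2 l, 2^-1 < l & admissible_lambda S u M1 M2 l.
Proof.
move=> [S0 cS _ Su _] D1 D2 m0 H1 H3 H2 H4.
set a := M1 true; set b := M2 true.
have ab s : S s -> 0 <= ev a s <= 1 /\ 0 <= ev b s <= 1.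
  by move=> Ss; split; [exact: dich_eff D1 Ss | exact: dich_eff D2 Ss].
have cA : forall s, S s -> ev h s <= 0 -> 0 < ev (a + b) s.
  move=> s Ss hz; rewrite evD; have [/andP[x0 x1] /andP[y0 y1]] := ab s Ss.
  case: (ltrP 0 (ev a s + ev b s)) => // hxy.
  have := H3 s Ss ltac:(lra) ltac:(lra); lra.
have [eA eA0 hA] := min_pos cS (@ev_continuous _ _ h) (@ev_continuous _ _ _) cA.
have cD : forall s, S s -> ev h s <= 0 -> 0 < ev ((2:R) *: u - (a + b)) s.
  move=> s Ss hz; rewrite !(evD, evN, evZ) Su //; have [/andP[x0 x1] /andP[y0 y1]] := ab s Ss.
  case: (ltrP 0 (2 * 1 + - (ev a s + ev b s))) => // hxy.
  have := H1 s Ss ltac:(lra) ltac:(lra); lra.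
have [eD eD0 hD] := min_pos cS (@ev_continuous _ _ h) (@ev_continuous _ _ _) cD.
have cB : forall s, S s -> ev (- h - (m / 2) *: u) s <= 0 -> 0 < ev (u + a - b) s.
  move=> s Ss; rewrite !(evD, evN, evZ) Su // => hz; have [/andP[x0 x1] /andP[y0 y1]] := ab s Ss.
  case: (ltrP 0 (1 + ev a s + - ev b s)) => // hxy.
  have := H4 s Ss ltac:(lra) ltac:(lra); lra.
have [eB eB0 hB] := min_pos cS (@ev_continuous _ _ _) (@ev_continuous _ _ _) cB.
have cC : forall s, S s -> ev (- h - (m / 2) *: u) s <= 0 -> 0 < ev (u - a + b) s.
  move=> s Ss; rewrite !(evD, evN, evZ) Su // => hz; have [/andP[x0 x1] /andP[y0 y1]] := ab s Ss.
  case: (ltrP 0 (1 + - ev a s + ev b s)) => // hxy.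
  have := H2 s Ss ltac:(lra) ltac:(lra); lra.
have [eC eC0 hC] := min_pos cS (@ev_continuous _ _ _) (@ev_continuous _ _ _) cC.
have [H H0 hH] := bound_cpt cS S0 (@ev_continuous _ _ h).
have [e1 e10 [e1A e1D]] := pos_min2 eA0 eD0.
have [e2 e20 [e2B e2C]] := pos_min2 eB0 eC0.
have [eta eta0 [ee1 ee2]] := pos_min2 e10 e20.
pose d := eta / (8 * H).
have d0 : 0 <= d by rewrite /d; apply: divr_ge0; lra.
have dH : d * H = eta / 8 by rewrite /d; field; lra.
have dm0 : 0 < d * m / 2.
  by apply: divr_gt0 => //; apply: mulr_gt0 => //; rewrite /d; apply: divr_gt0; lra.
have eta8 : 0 < eta / 8 by apply: divr_gt0 => //; lra.
have [e3 e30 [e3a e3b]] := pos_min2 eta8 dm0.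
have half : (0 : R) < 2^-1 by rewrite invr_gt0; lra.
have [e e0 [ea eb]] := pos_min2 e30 half.
exists (2^-1 + e); first lra.
apply: (build_adm (d := d) (h := h)) => //; first lra.
move=> s Ss; have [xx yy] := ab s Ss.
apply: (arith (H := H) (eta := eta) (m := m)) => //; try lra.
- by have := hH s Ss; rewrite ler_norml.
- move=> hz; have := hA s Ss hz; rewrite evD; lra.
- move=> hz; have := hD s Ss hz; rewrite !(evD, evN, evZ) Su //; lra.
- move=> hz; have := hB s Ss; rewrite !(evD, evN, evZ) Su //; move=> /(_ ltac:(lra)); lra.
- move=> hz; have := hC s Ss; rewrite !(evD, evN, evZ) Su //; move=> /(_ ltac:(lra)); lra.
Qed.
End Pert.

Section Dot.
Variables (R : realType) (n : nat).
Implicit Types (x y w : 'rV[R]_n).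

Definition dot x y : R := \sum_j x 0 j * y 0 j.
Lemma dotC x y : dot x y = dot y x.
Proof. by apply: eq_bigr => j _; rewrite mulrC. Qed.
Lemma dot_ev x y : dot x y = ev y^T x.
Proof. by rewrite evE; apply: eq_bigr => j _; rewrite mxE. Qed.
Lemma dotDl x y w : dot (x + y) w = dot x w + dot y w.
Proof. by rewrite !dot_ev evDr. Qed.
Lemma dotZl c x w : dot (c *: x) w = c * dot x w.
Proof. by rewrite !dot_ev evZr. Qed.
Lemma dotDr x y w : dot w (x + y) = dot w x + dot w y.
Proof. by rewrite dotC dotDl !(dotC w). Qed.
Lemma dotZr c x w : dot w (c *: x) = c * dot w x.
Proof. by rewrite dotC dotZl dotC. Qed.
Lemma dot_ge0 x : 0 <= dot x x.
Proof. by apply: sumr_ge0 => j _; rewrite -expr2 sqr_ge0. Qed.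
Lemma dot_eq0 x : dot x x = 0 -> x = 0.
Proof.
move=> /eqP; rewrite psumr_eq0; last by move=> j _; rewrite -expr2 sqr_ge0.
move=> /allP H; apply/rowP => j; rewrite !mxE.
have /H : j \in index_enum 'I_n by rewrite mem_index_enum.
by rewrite /= mulf_eq0 orbb => /eqP.
Qed.

Lemma dot_expand x w t :
  dot (x + t *: w) (x + t *: w) = dot x x + 2 * t * dot x w + t ^+ 2 * dot w w.
Proof. rewrite !(dotDl, dotDr, dotZl, dotZr) (dotC w x); ring. Qed.

Lemma var_ineq (c N : R) : 0 <= N -> (forall t, 0 < t <= 1 -> 0 <= 2 * t * c + t ^+ 2 * N) ->
  0 <= c.
Proof.
move=> N0 H; case: (lerP 0 c) => // c0; exfalso.
pose t := - c / (N - c).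
have Nc : 0 < N - c by lra.
have t0 : 0 < t by rewrite /t; apply: divr_gt0; lra.
have tt : t * (N - c) = - c by rewrite /t; field; lra.
have t1 : t <= 1.
  rewrite /t ler_pdivrMr //; lra.
have tc : 0 < t * (- c) by apply: mulr_gt0; lra.
have e1 : t * N = - c + t * c by lra.
have e2 : 2 * t * c + t ^+ 2 * N = t * (2 * c + t * N) by ring.
have := H t ltac:(lra); rewrite e2 e1 pmulr_rge0 //; lra.
Qed.
End Dot.

Section Min4.
Variables (R : realType) (n : nat).
Local Notation V := 'rV[R]_n.

Lemma fst_cont {T U : topologicalType} : continuous (@fst T U).
Proof. by move=> p; exact: cvg_fst. Qed.
Lemma snd_cont {T U : topologicalType} : continuous (@snd T U).
Proof. by move=> p; exact: cvg_snd. Qed.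

Lemma coord_cont (f : (V * V) * (V * V) -> V) (j : 'I_n) :
  continuous f -> continuous (fun p => f p 0 j).
Proof.
move=> cf p; apply: (@continuous_comp _ _ _ f (fun M : V => M 0 j)); first exact: cf.
exact: coord_continuous.
Qed.

Lemma min4 (F1 F2 F3 F4 : set V) :
  compact F1 -> compact F2 -> compact F3 -> compact F4 ->
  F1 !=set0 -> F2 !=set0 -> F3 !=set0 -> F4 !=set0 ->
  exists s1 s2 s3 s4, [/\ F1 s1, F2 s2, F3 s3, F4 s4 &
   forall t1 t2 t3 t4, F1 t1 -> F2 t2 -> F3 t3 -> F4 t4 ->
     dot (s1 - s2 + s3 - s4) (s1 - s2 + s3 - s4) <=
     dot (t1 - t2 + t3 - t4) (t1 - t2 + t3 - t4)].
Proof.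
move=> c1 c2 c3 c4 [x1 h1] [x2 h2] [x3 h3] [x4 h4].
pose K := (F1 `*` F2) `*` (F3 `*` F4).
have cK : compact K by apply: compact_setX; apply: compact_setX.
have K0 : K !=set0 by exists ((x1, x2), (x3, x4)).
pose L (p : (V * V) * (V * V)) := p.1.1 - p.1.2 + p.2.1 - p.2.2.
have cL : forall j, continuous (fun p => L p 0 j).
  move=> j.
  have -> : (fun p => L p 0 j) = (fun p => p.1.1 0 j - p.1.2 0 j + p.2.1 0 j - p.2.2 0 j).
    by apply/funext => p; rewrite /L !mxE.
  move=> p; apply: cvgB; [apply: cvgD; [apply: cvgB|]|].
  - apply: (coord_cont (f := fun p => p.1.1)) => q.
    exact: (@continuous_comp _ _ _ fst fst q (@fst_cont _ _ q) (@fst_cont _ _ _)).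
  - apply: (coord_cont (f := fun p => p.1.2)) => q.
    exact: (@continuous_comp _ _ _ fst snd q (@fst_cont _ _ q) (@snd_cont _ _ _)).
  - apply: (coord_cont (f := fun p => p.2.1)) => q.
    exact: (@continuous_comp _ _ _ snd fst q (@snd_cont _ _ q) (@fst_cont _ _ _)).
  - apply: (coord_cont (f := fun p => p.2.2)) => q.
    exact: (@continuous_comp _ _ _ snd snd q (@snd_cont _ _ q) (@snd_cont _ _ _)).
have cPhi : continuous (fun p => dot (L p) (L p)).
  apply: (@continuous_big _ _ +%R 0 xpredT); first exact: (@add_continuous R^o).
  by move=> j _ p; apply: continuousM; apply: cL.
have [[[s1 s2] [s3 s4]] sK smin] := compact_EVT_min K0 cK (continuous_subspaceT cPhi).
move: sK; rewrite inE => -[[/= k1 k2] [/= k3 k4]].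
exists s1, s2, s3, s4; split => // t1 t2 t3 t4 g1 g2 g3 g4.
by apply: (smin ((t1, t2), (t3, t4))); rewrite inE.
Qed.
End Min4.

Section Sep.
Variables (R : realType) (n : nat).
Local Notation V := 'rV[R]_n.

Lemma dotNr (x w : V) : dot w (- x) = - dot w x.
Proof. by rewrite -scaleN1r dotZr mulN1r. Qed.
Lemma dotNl (x w : V) : dot (- x) w = - dot x w.
Proof. by rewrite -scaleN1r dotZl mulN1r. Qed.

Lemma var_dir (d w : V) :
  (forall t : R, 0 < t <= 1 -> dot d d <= dot (d + t *: w) (d + t *: w)) ->
  0 <= dot d w.
Proof.
move=> H; apply: (var_ineq (dot_ge0 w)) => t t01.
by have := H t t01; rewrite dot_expand; lra.
Qed.

Definition face (S : set V) (a b : 'cV[R]_n) (al be : R) : set V :=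
  S `&` (ev a @^-1` [set al]) `&` (ev b @^-1` [set be]).

Lemma face_compact (S : set V) a b al be : compact S -> compact (face S a b al be).
Proof.
move=> cS; rewrite /face; apply: compact_closedI; first apply: compact_closedI => //.
  by apply: (proj1 (continuous_closedP _)); [exact: ev_continuous | exact: closed_eq].
by apply: (proj1 (continuous_closedP _)); [exact: ev_continuous | exact: closed_eq].
Qed.

Lemma face_conv (S : set V) u a b al be s t (l : R) : state_space S u ->
  face S a b al be s -> face S a b al be t -> 0 <= l <= 1 ->
  face S a b al be (l *: s + (1 - l) *: t).
Proof.
move=> [_ _ conv _ _] [[Ss hsa] hsb] [[St hta] htb] hl.
split; [split|]; first exact: conv.
- by rewrite /= evDr !evZr hsa hta; ring.
- by rewrite /= evDr !evZr hsb htb; ring.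
Qed.

End Sep.

Section Sep2.
Variables (R : realType) (n : nat).
Local Notation V := 'rV[R]_n.

Definition sep_cond (S : set V) (a b h : 'cV[R]_n) (m : R) :=
  [/\ (forall s, S s -> ev a s = 1 -> ev b s = 1 -> m <= ev h s),
      (forall s, S s -> ev a s = 0 -> ev b s = 0 -> m <= ev h s),
      (forall s, S s -> ev a s = 1 -> ev b s = 0 -> ev h s <= - m) &
      (forall s, S s -> ev a s = 0 -> ev b s = 1 -> ev h s <= - m)].

Definition square (S : set V) (a b : 'cV[R]_n) :=
  exists s1 s2 s3 s4 : V,
    [/\ [/\ S s1, S s2, S s3 & S s4], affinely_dependent4 s1 s2 s3 s4,
        [/\ ev a s1 = 1, ev a s2 = 1, ev a s3 = 0 & ev a s4 = 0] &
        [/\ ev b s1 = 1, ev b s4 = 1, ev b s2 = 0 & ev b s3 = 0]].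

Lemma faces_sep (S : set V) u a b : state_space S u ->
  square S a b \/ exists h (m : R), 0 < m /\ sep_cond S a b h m.
Proof.
move=> SS; have [_ cS _ Su _] := SS.
have [[s1 F1]|N1] := pselect (face S a b 1 1 !=set0); last first.
  right; exists (u - 2%:R *: (a + b)), 1; split => //; split => s Ss ha hb;
    rewrite ?(evD, evN, evZ) Su // ha hb; try lra.
  by exfalso; apply: N1; exists s.
have [[s2 F2]|N2] := pselect (face S a b 1 0 !=set0); last first.
  right; exists (u + 2%:R *: (a - b)), 1; split => //; split => s Ss ha hb;
    rewrite ?(evD, evN, evZ) Su // ha hb; try lra.
  by exfalso; apply: N2; exists s.
have [[s3 F3]|N3] := pselect (face S a b 0 0 !=set0); last first.
  right; exists (2%:R *: (a + b) - 3%:R *: u), 1; split => //; split => s Ss ha hb;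
    rewrite ?(evD, evN, evZ) Su // ha hb; try lra.
  by exfalso; apply: N3; exists s.
have [[s4 F4]|N4] := pselect (face S a b 0 1 !=set0); last first.
  right; exists (u - 2%:R *: (a - b)), 1; split => //; split => s Ss ha hb;
    rewrite ?(evD, evN, evZ) Su // ha hb; try lra.
  by exfalso; apply: N4; exists s.
have [t1 [t2 [t3 [t4 [G1 G2 G3 G4 tmin]]]]] := min4 (@face_compact _ _ S a b 1 1 cS)
  (@face_compact _ _ S a b 1 0 cS) (@face_compact _ _ S a b 0 0 cS) (@face_compact _ _ S a b 0 1 cS)
  (ex_intro _ s1 F1) (ex_intro _ s2 F2) (ex_intro _ s3 F3) (ex_intro _ s4 F4).
move: G1 G2 G3 G4 => G1 G2 G3 G4.
set d := t1 - t2 + t3 - t4 in tmin.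
have [N0|Nn0] := eqVneq (dot d d) 0.
  left; have d0 := dot_eq0 N0.
  move: G1 G2 G3 G4 => [[S1 a1] b1] [[S2 a2] b2] [[S3 a3] b3] [[S4 a4] b4].
  exists t1, t2, t3, t4; split => //.
  exists 1, (-1), 1, (-1); split; first by rewrite oner_neq0.
    by ring.
  by rewrite -d0 /d; apply/rowP => j; rewrite !mxE; ring.
right.
have m0 : 0 < dot d d by rewrite lt_def Nn0 dot_ge0.
have V1 s : face S a b 1 1 s -> dot d t1 <= dot d s.
  move=> Fs; have := var_dir (d := d) (w := s - t1); rewrite dotDr dotNr.
  move=> H; suff : 0 <= dot d s - dot d t1 by lra.
  apply: H => t /andP[t0 t1'].
  have := tmin _ _ _ _ (face_conv SS Fs G1 (l := t) ltac:(lra)) G2 G3 G4.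
  by have -> : t *: s + (1 - t) *: t1 - t2 + t3 - t4 = d + t *: (s - t1)
    by apply/rowP => j; rewrite !mxE; ring.
have V3 s : face S a b 0 0 s -> dot d t3 <= dot d s.
  move=> Fs; have := var_dir (d := d) (w := s - t3); rewrite dotDr dotNr.
  move=> H; suff : 0 <= dot d s - dot d t3 by lra.
  apply: H => t /andP[t0 t1'].
  have := tmin _ _ _ _ G1 G2 (face_conv SS Fs G3 (l := t) ltac:(lra)) G4.
  by have -> : t1 - t2 + (t *: s + (1 - t) *: t3) - t4 = d + t *: (s - t3)
    by apply/rowP => j; rewrite !mxE; ring.
have V2 s : face S a b 1 0 s -> dot d s <= dot d t2.
  move=> Fs; have := var_dir (d := d) (w := t2 - s); rewrite dotDr dotNr.
  move=> H; suff : 0 <= dot d t2 - dot d s by lra.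
  apply: H => t /andP[t0 t1'].
  have := tmin _ _ _ _ G1 (face_conv SS Fs G2 (l := t) ltac:(lra)) G3 G4.
  by have -> : t1 - (t *: s + (1 - t) *: t2) + t3 - t4 = d + t *: (t2 - s)
    by apply/rowP => j; rewrite !mxE; ring.
have V4 s : face S a b 0 1 s -> dot d s <= dot d t4.
  move=> Fs; have := var_dir (d := d) (w := t4 - s); rewrite dotDr dotNr.
  move=> H; suff : 0 <= dot d t4 - dot d s by lra.
  apply: H => t /andP[t0 t1'].
  have := tmin _ _ _ _ G1 G2 G3 (face_conv SS Fs G4 (l := t) ltac:(lra)).
  by have -> : t1 - t2 + t3 - (t *: s + (1 - t) *: t4) = d + t *: (t4 - s)
    by apply/rowP => j; rewrite !mxE; ring.
pose al1 := dot d t1; pose al2 := dot d t2; pose al3 := dot d t3; pose al4 := dot d t4.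
have md : dot d d = al1 - al2 + al3 - al4.
  by rewrite /al1 /al2 /al3 /al4 {2}/d !(dotDr, dotNr).
exists (d^T + ((al3 - al1) / 2) *: (a + b - u) + ((al4 - al2) / 2) *: (a - b)
        - ((al1 + al2 + al3 + al4) / 4) *: u), (dot d d / 4).
split; first by apply: divr_gt0 => //; lra.
have hE s : ev d^T s = dot d s by rewrite -dot_ev dotC.
split => s Ss ha hb; rewrite !(evD, evN, evZ) hE Su // ha hb.
- have := V1 s ltac:(by split; [split|]); rewrite -/al1; lra.
- have := V3 s ltac:(by split; [split|]); rewrite -/al3; lra.
- have := V2 s ltac:(by split; [split|]); rewrite -/al2; lra.
- have := V4 s ltac:(by split; [split|]); rewrite -/al4; lra.
Qed.
End Sep2.

Section Fin.
Variables (R : realType) (n : nat).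
Local Notation V := 'rV[R]_n.

Lemma fnorm2 (S : set V) (f : 'cV[R]_n) :
  (forall s, S s -> `|ev f s| <= 2) -> (exists2 s, S s & `|ev f s| = 2) ->
  fnorm S f = 2.
Proof.
move=> ub [s0 S0 e0]; rewrite /fnorm.
have ne : [set `|ev f s| | s in S] !=set0 by exists `|ev f s0|; exists s0.
have ubE : ubound [set `|ev f s| | s in S] 2 by move=> _ [s Ss <-]; exact: ub.
apply/eqP; rewrite eq_le; apply/andP; split; first exact: ge_sup.
have hs : has_sup [set `|ev f s| | s in S] by split => //; exists 2.
by rewrite -{1}e0; apply: sup_upper_bound => //; exists s0.
Qed.

Lemma pbar_one (S : set V) u M1 M2 :
  (forall s, S s -> ev u s = 1) -> dichotomic S u M1 -> dichotomic S u M2 ->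
  square S (M1 true) (M2 true) -> Pbar S M1 M2 = 1.
Proof.
move=> Su D1 D2 [s1 [s2 [s3 [s4 [[S1 S2 S3 S4] _ [a1 a2 a3 a4] [b1 b4 b2 b3]]]]]].
have ub x y : forall s, S s -> `|ev (M1 x + M2 y) s| <= 2.
  move=> s Ss; rewrite evD; have := dich_eff x D1 Ss; have := dich_eff y D2 Ss.
  move=> /andP[? ?] /andP[? ?]; rewrite ler_norml; apply/andP; split; lra.
rewrite /Pbar !big_bool /=.
rewrite (fnorm2 (ub true true)); last by exists s1 => //; rewrite evD a1 b1 ger0_norm; lra.
rewrite (fnorm2 (ub true false)); last first.
  by exists s2 => //; rewrite evD a2 (dich_false s2 D2) Su // b2; rewrite ger0_norm; lra.
rewrite (fnorm2 (ub false true)); last first.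
  by exists s4 => //; rewrite evD b4 (dich_false s4 D1) Su // a4; rewrite ger0_norm; lra.
rewrite (fnorm2 (ub false false)); last first.
  exists s3 => //; rewrite evD (dich_false s3 D1) (dich_false s3 D2) Su // a3 b3.
  by rewrite ger0_norm; lra.
by field.
Qed.
End Fin.

Unset Implicit Arguments.

Theorem proposition7 (R : realType) (n : nat) (S : set 'rV[R]_n) (u : 'cV[R]_n)
    (M1 M2 : bool -> 'cV[R]_n) :
  state_space S u -> dichotomic S u M1 -> dichotomic S u M2 ->
  (maximally_incompatible S u M1 M2 <->
   (Pbar S M1 M2 = 1 /\
    exists s1 s2 s3 s4 : 'rV[R]_n,
      [/\ [/\ S s1, S s2, S s3 & S s4], affinely_dependent4 s1 s2 s3 s4,
          [/\ ev (M1 true) s1 = 1, ev (M1 true) s2 = 1,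
              ev (M1 true) s3 = 0 & ev (M1 true) s4 = 0] &
          [/\ ev (M2 true) s1 = 1, ev (M2 true) s4 = 1,
              ev (M2 true) s2 = 0 & ev (M2 true) s3 = 0]])).
Proof.
move=> SS D1 D2; have [_ _ _ Su _] := SS; split.
- move=> [_ MI].
  have [sq|[h [m [m0 [c1 c2 c3 c4]]]]] := faces_sep (M1 true) (M2 true) SS.
    by split => //; exact: (pbar_one Su D1 D2 sq).
  have [l l2 adm] := perturb SS D1 D2 m0 c1 c2 c3 c4.
  by have := MI l adm; lra.
- move=> [_ [s1 [s2 [s3 [s4 [HS Had HM1 HM2]]]]]]; split.
    apply: (build_adm (d := 0) (h := 0)) => //; first lra.
    move=> s Ss; have := dich_eff true D1 Ss; have := dich_eff true D2 Ss.
    move=> /andP[? ?] /andP[? ?]; split; lra.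
  by move=> l; exact: adm_bound Su D1 D2 HS Had HM1 HM2.
Qed.
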